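(* Let $P$ be a $K\times K$ substochastic matrix with $\rho(P)<1$, and let $\mu,\lambda,N\in\mathbb{R}_+^K$. Consider the linear network $\mathbf{N}^{(i)}(t)=N^{(i)}+\lambda^{(i)}t$, $\mathbf{S}^{(i)}(t)=\mu^{(i)}t$, $\mathbf{P}^{(i,j)}(t)=P^{(i,j)}t$. Then the fixed point equation $\mathbf{A}=\Gamma(\mathbf{D},\mathbf{P},\mathbf{N})$, $\mathbf{D}=\Phi(\mathbf{A},\mathbf{S})$ has a unique solution $(\mathbf{A},\mathbf{D})\in\mathbb{D}(\mathbb{R}_+^K)\times\mathbb{D}_0(\mathbb{R}_+^K)$, given by $\mathbf{A}(t)=x(\mu t,P,N+\lambda t)$ and $\mathbf{D}^{(i)}(t)=\mathbf{A}^{(i)}(t)\wedge\mu^{(i)}t$.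
   Context: $\mathbb{D}(\mathbb{R}_+^K)$: càdlàg componentwise non-decreasing functions $\mathbb{R}_+\to\mathbb{R}_+^K$; $\mathbb{D}_0$: those vanishing at $0$. $\rho$ denotes the spectral radius. For $X\in\mathbb{D}_0(\mathbb{R}_+^K)$, $\mathbf{P}=(\mathbf{P}^{(i,j)})$ with $\mathbf{P}^{(i,j)}\in\mathbb{D}_0(\mathbb{R}_+)$, and $\mathbf{N}\in\mathbb{D}(\mathbb{R}_+^K)$: $\Gamma(X,\mathbf{P},\mathbf{N})^{(i)}(t)=\mathbf{N}^{(i)}(t)+\sum_{j=1}^K\mathbf{P}^{(j,i)}(X^{(j)}(t))$. For $X\in\mathbb{D}(\mathbb{R}_+^K)$, $Y\in\mathbb{D}_0(\mathbb{R}_+^K)$: $\Phi(X,Y)^{(i)}(t)=\inf_{0\le s\le t}\{Y^{(i)}(t)-Y^{(i)}(s)+X^{(i)}(s)\}\wedge Y^{(i)}(t)$. For a substochastic $P$ with $\rho(P)<1$ and $(\alpha,y)\in\mathbb{R}_+^{2K}$, $x(y,P,\alpha)\in\mathbb{R}_+^K$ denotes the unique solution of $x^{(i)}=\alpha^{(i)}+\sum_{j=1}^KP^{(j,i)}(x^{(j)}\wedge y^{(j)})$, $1\le i\le K$ (this solution exists, is unique, and is continuous and non-decreasing in $(y,\alpha)$). Here $\mu t$ denotes the vector $(\mu^{(i)}t)_i$. *)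

(* Defs.v *)
From Stdlib Require Import Reals.
From mathcomp Require Import all_boot all_order all_algebra.
From mathcomp Require Import all_classical all_reals all_analysis.
From mathcomp Require Import Rstruct Rstruct_topology.
From mathcomp.real_closed Require Import complex.

Set Implicit Arguments.
Unset Strict Implicit.
Unset Printing Implicit Defensive.

Import Order.TTheory GRing.Theory Num.Theory.
Local Open Scope classical_set_scope.
Local Open Scope ring_scope.

Definition substochastic (K : nat) (P : 'M[R]_K) : Prop :=
  (forall i j, 0 <= P i j) /\ (forall i, \sum_(j < K) P i j <= 1).

(* spectral radius: largest modulus of a complex eigenvalue
   (complex root of the characteristic polynomial); 0 if K = 0. *)
Definition spectral_radius (K : nat) (P : 'M[R]_K) : R :=
  sup [set Normc.normc z | z in
        [set z : R[i] | root (char_poly (map_mx (real_complex R) P)) z]].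

(* Paths are functions R -> R; only their restriction to R_+ matters. *)
Definition cadlag_Rp (f : R -> R) : Prop :=
  forall t : R, 0 <= t ->
    (f x @[x --> t^'+] --> f t) /\ (0 < t -> cvg (f x @[x --> t^'-])).

Definition nondecr_Rp (f : R -> R) : Prop :=
  forall s t : R, 0 <= s -> s <= t -> f s <= f t.

Definition nonneg_Rp (f : R -> R) : Prop := forall t : R, 0 <= t -> 0 <= f t.

Definition Dspace (K : nat) (X : 'I_K -> R -> R) : Prop :=
  forall i, [/\ nonneg_Rp (X i), nondecr_Rp (X i) & cadlag_Rp (X i)].

Definition D0space (K : nat) (X : 'I_K -> R -> R) : Prop :=
  Dspace X /\ forall i, X i 0 = 0.

Definition Gamma (K : nat) (X : 'I_K -> R -> R) (Pf : 'I_K -> 'I_K -> R -> R)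
  (Nf : 'I_K -> R -> R) : 'I_K -> R -> R :=
  fun i t => Nf i t + \sum_(j < K) Pf j i (X j t).

Definition Phi (K : nat) (X Y : 'I_K -> R -> R) : 'I_K -> R -> R :=
  fun i t => Num.min
    (inf [set Y i t - Y i s + X i s | s in [set s : R | 0 <= s <= t]])
    (Y i t).

Definition x_eqn (K : nat) (y : 'I_K -> R) (P : 'M[R]_K) (alpha : 'I_K -> R)
  (x : 'I_K -> R) : Prop :=
  (forall i, 0 <= x i) /\
  (forall i, x i = alpha i + \sum_(j < K) P j i * Num.min (x j) (y j)).

(* x(y, P, alpha): the (unique, when rho(P) < 1) solution of x_eqn *)
Definition xsol (K : nat) (y : 'I_K -> R) (P : 'M[R]_K) (alpha : 'I_K -> R)
  : 'I_K -> R := get [set x | x_eqn y P alpha x].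

(* Main.v *)
Require Import Defs.
From Stdlib Require Import Reals.
From mathcomp Require Import all_boot all_order all_algebra.
From mathcomp Require Import all_classical all_reals all_analysis.
From mathcomp Require Import Rstruct Rstruct_topology.
From mathcomp.real_closed Require Import complex.
From mathcomp Require Import lra.
Import Order.TTheory GRing.Theory Num.Theory.
Local Open Scope classical_set_scope.
Local Open Scope ring_scope.

Lemma normc_ge0' (z : R[i]) : 0 <= Normc.normc z.
Proof. by case: z => a b; rewrite /Normc.normc sqrtr_ge0. Qed.

Lemma in_seq_le_sum (r : seq R[i]) z : z \in r ->
  Normc.normc z <= \sum_(w <- r) Normc.normc w.
Proof.
elim: r => [//|a r IH]; rewrite inE big_cons => /orP[/eqP->|/IH h].
  by rewrite lerDl sumr_ge0 // => w _; exact: normc_ge0'.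
by apply: (le_trans h); rewrite lerDr normc_ge0'.
Qed.

Lemma spec_ge1 K (P : 'M[R]_K) :
  root (char_poly (map_mx (real_complex R) P)) 1 -> 1 <= spectral_radius P.
Proof.
move=> r1.
set p := char_poly _ in r1 *.
have [rs Hp] := closed_field_poly_normal p.
have lc : lead_coef p != 0.
  by rewrite (monicP (char_poly_monic _)) oner_neq0.
rewrite /spectral_radius.
have <- : Normc.normc (1 : R[i]) = 1 by rewrite Normc.normc1.
apply: sup_upper_bound; last by exists 1.
split; first by exists (Normc.normc (1:R[i])), 1.
exists (\sum_(w <- rs) Normc.normc w) => _ [z /= rz <-].
apply: in_seq_le_sum.
by rewrite -root_prod_XsubC -(rootZ _ _ lc) -Hp.
Qed.

Lemma eig1 K (P : 'M[R]_K) : spectral_radius P < 1 ->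
  forall u : 'I_K -> R, (forall i, u i = \sum_j P j i * u j) -> forall i, u i = 0.
Proof.
move=> hr u hu i; apply/eqP/negPn/negP => ui.
have : 1 <= spectral_radius P; last by rewrite leNgt hr.
apply: spec_ge1; rewrite -eigenvalue_root_char.
apply/eigenvalueP; exists (\row_j real_complex R (u j)).
  apply/rowP => j; rewrite !mxE mul1r (hu j) rmorph_sum; apply: eq_bigr => k _.
  by rewrite !mxE rmorphM mulrC.
apply/negP => /eqP /rowP /(_ i); rewrite !mxE => h.
move/eqP: ui; apply; apply: (@complexI R); rewrite h.
by rewrite rmorph0.
Qed.

Lemma Lnonneg K (P : 'M[R]_K) : substochastic P -> spectral_radius P < 1 ->
  forall u : 'I_K -> R, (forall i, 0 <= u i) ->
  (forall i, u i <= \sum_j P j i * u j) -> forall i, u i = 0.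
Proof.
move=> [P0 P1] hr u u0 hu; apply: (@eig1 K P hr u) => i.
pose d k := \sum_j P j k * u j - u k.
have d0 k : 0 <= d k by rewrite subr_ge0.
have sd : \sum_k d k <= 0.
  rewrite /d sumrB subr_le0 exchange_big /=.
  apply: ler_sum => j _; rewrite -mulr_suml.
  by rewrite ler_piMl.
have : d i == 0.
  have /psumr_eq0P h : \sum_k d k = 0 by apply/le_anti; rewrite sd sumr_ge0.
  by rewrite h.
by rewrite subr_eq0 => /eqP ->.
Qed.

Lemma min_sub_le (a b c d : R) : c <= d ->
  Num.min a c - Num.min b d <= Num.max (a - b) 0.
Proof.
move=> cd; have [bd|db] := leP b d.
  by rewrite le_max lerD2r ge_min lexx.
by rewrite le_max subr_le0 ge_min cd !orbT.
Qed.

Lemma Cmp K (P : 'M[R]_K) : substochastic P -> spectral_radius P < 1 ->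
  forall (a a' y y' x x' : 'I_K -> R),
  (forall i, a i <= a' i) -> (forall i, y i <= y' i) ->
  (forall i, x i <= a i + \sum_j P j i * Num.min (x j) (y j)) ->
  (forall i, x' i = a' i + \sum_j P j i * Num.min (x' j) (y' j)) ->
  forall i, x i <= x' i.
Proof.
move=> hs hr a a' y y' x x' ha hy hx hx' i.
pose u k := Num.max (x k - x' k) 0.
have u0 k : 0 <= u k by rewrite le_max lexx orbT.
have hu k : u k <= \sum_j P j k * u j.
  rewrite ge_max sumr_ge0 ?andbT; last by move=> j _; rewrite mulr_ge0 //; case: hs.
  apply: (@le_trans _ _ (\sum_j P j k * (Num.min (x j) (y j) - Num.min (x' j) (y' j)))).
    have e1 := hx k; have e2 := hx' k; have e3 := ha k.
    rewrite (eq_bigr (fun j => P j k * Num.min (x j) (y j) - P j k * Num.min (x' j) (y' j))); last by move=> j _; rewrite mulrBr.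
    rewrite sumrB; lra.
  apply: ler_sum => j _.
  rewrite ler_wpM2l //; first by case: hs.
  exact: min_sub_le.
have e := @Lnonneg K P hs hr u u0 hu i.
have hm : x i - x' i <= u i by rewrite /u le_max lexx.
by move: hm; rewrite e subr_le0.
Qed.

Lemma xsol_exists K (P : 'M[R]_K) : substochastic P ->
  forall (y a : 'I_K -> R), (forall i, 0 <= y i) -> (forall i, 0 <= a i) ->
  exists x, x_eqn y P a x.
Proof.
move=> [P0 P1] y a y0 a0.
pose F (x : 'I_K -> R) i := a i + \sum_j P j i * Num.min (x j) (y j).
have Fmono x x' : (forall i, x i <= x' i) -> forall i, F x i <= F x' i.
  move=> h i; rewrite lerD2l; apply: ler_sum => j _; rewrite ler_wpM2l //.
  by rewrite le_min !ge_min h lexx orbT.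
have Fpos x : (forall i, 0 <= x i) -> forall i, 0 <= F x i.
  move=> h i; rewrite addr_ge0 // sumr_ge0 // => j _.
  by rewrite mulr_ge0 // le_min h y0.
pose S := [set x : 'I_K -> R | (forall i, 0 <= x i) /\ (forall i, F x i <= x i)].
pose x0 i := a i + \sum_j P j i * y j.
have Sx0 : S x0.
  have x00 i : 0 <= x0 i by rewrite addr_ge0 // sumr_ge0 // => j _; rewrite mulr_ge0.
  split=> // i; rewrite lerD2l; apply: ler_sum => j _; rewrite ler_wpM2l //.
  by rewrite ge_min lexx orbT.
pose xs i := inf [set x i | x in S].
have ne i : [set x i | x in S] !=set0 by exists (x0 i), x0.
have lb i : lbound [set x i | x in S] 0 by move=> _ [x [Hx _] <-].
have xs_le x i : S x -> xs i <= x i.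
  by move=> Sx; apply: (ge_inf (ex_intro _ 0 (lb i))); exists x.
have xs0 i : 0 <= xs i by apply: lb_le_inf.
have Fxs i : F xs i <= xs i.
  apply: lb_le_inf => // _ [x Sx <-].
  case: (Sx) => _ h; exact: le_trans (Fmono _ _ (fun k => xs_le x k Sx) i) (h i).
have SFxs : S (F xs) by split; [exact: Fpos | exact: Fmono].
exists xs; split=> // i; apply/le_anti; rewrite Fxs andbT.
exact: (xs_le (F xs) i SFxs).
Qed.

Lemma near_dist (t d : R) : 0 < d -> \forall x \near t, `|t - x| < d.
Proof. by move=> d0; apply/nbhs_ballP; exists d. Qed.

Lemma cadlag_of (f : R -> R) c0 :
  (forall x, 0 < x -> `|f x - f 0| <= c0 * x) ->
  (forall t, 0 < t -> exists C, forall x, t/2 < x -> `|f x - f t| <= C * `|x - t|) ->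
  cadlag_Rp f.
Proof.
move=> h0 ht t; rewrite le_eqVlt => /orP[/eqP<-|tpos].
  split; last by rewrite ltxx.
  apply/(@cvgrPdist_le R R^o) => e e0.
  have d0 : 0 < e / (`|c0| + 1) by rewrite divr_gt0 // ltr_wpDl.
  near=> x.
  have xpos : 0 < x by near: x; exact: nbhs_right_gt.
  have xd : x < e / (`|c0| + 1) by near: x; exact: nbhs_right_lt.
  rewrite ltr_pdivlMr ?ltr_wpDl // in xd.
  have c0x : c0 * x <= `|c0| * x by rewrite ler_wpM2r ?ler_norm // ltW.
  rewrite distrC; apply: le_trans (h0 x xpos) _; lra.
have [C hC] := ht t tpos.
have hc : f x @[x --> t] --> f t.
  apply/(@cvgrPdist_le R R^o) => e e0.
  have d0 : 0 < Num.min (t / 2) (e / (`|C| + 1)).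
    by rewrite lt_min divr_gt0 // divr_gt0 // ltr_wpDl.
  near=> x.
  have hx : `|t - x| < Num.min (t / 2) (e / (`|C| + 1)) by near: x; exact: near_dist.
  move: hx; rewrite lt_min => /andP[h1 h2].
  rewrite ltr_pdivlMr ?ltr_wpDl // in h2.
  have xt : t / 2 < x.
    move: h1; rewrite ltr_norml => /andP[_]; lra.
  have Cx : C * `|x - t| <= `|C| * `|x - t| by rewrite ler_wpM2r ?ler_norm.
  have ee : `|x - t| = `|t - x| by rewrite distrC.
  rewrite ee in Cx; have n0 : 0 <= `|t - x| by [].
  rewrite distrC; apply: le_trans (hC x xt) _; rewrite ee; lra.
split; first exact: cvg_at_right_filter.
move=> _; apply/cvg_ex; exists (f t); exact: cvg_at_left_filter.
Unshelve. all: by end_near.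
Qed.

Lemma min_lip (a b c d : R) :
  `|Num.min a c - Num.min b d| <= `|a - b| + `|c - d|.
Proof.
have h1 : a - b <= `|a - b| := ler_norm _.
have h2 : b - a <= `|a - b| by rewrite distrC ler_norm.
have h3 : c - d <= `|c - d| := ler_norm _.
have h4 : d - c <= `|c - d| by rewrite distrC ler_norm.
rewrite ler_norml.
have [ac|ca] := leP a c; have [bd|db] := leP b d; apply/andP; split; lra.
Qed.

Lemma inf_lip (I : set R) (g1 g2 : R -> R) f : I !=set0 ->
  (forall r, I r -> 0 <= g1 r) -> (forall r, I r -> 0 <= g2 r) ->
  (forall r, I r -> `|g1 r - g2 r| <= f) ->
  `|inf (g1 @` I) - inf (g2 @` I)| <= f.
Proof.
move=> [r0 Ir0] p1 p2 h.
have lb1 : has_lbound (g1 @` I) by exists 0 => _ [r Ir <-]; exact: p1.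
have lb2 : has_lbound (g2 @` I) by exists 0 => _ [r Ir <-]; exact: p2.
have ne1 : (g1 @` I) !=set0 by exists (g1 r0), r0.
have ne2 : (g2 @` I) !=set0 by exists (g2 r0), r0.
have k1 : inf (g2 @` I) - f <= inf (g1 @` I).
  apply: lb_le_inf => // _ [r Ir <-].
  have := h r Ir; rewrite ler_norml => /andP[hr _].
  have : inf (g2 @` I) <= g2 r by apply: ge_inf => //; exists r.
  lra.
have k2 : inf (g1 @` I) - f <= inf (g2 @` I).
  apply: lb_le_inf => // _ [r Ir <-].
  have := h r Ir; rewrite ler_norml => /andP[_ hr].
  have : inf (g1 @` I) <= g1 r by apply: ge_inf => //; exists r.
  lra.
rewrite ler_norml; apply/andP; split; lra.
Qed.

Set Implicit Arguments.
Unset Strict Implicit.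
Section Net.
Variables (K : nat) (P : 'M[R]_K) (mu lambda N : 'I_K -> R).
Hypotheses (hs : substochastic P) (hr : spectral_radius P < 1)
  (mu0 : forall i, 0 <= mu i) (la0 : forall i, 0 <= lambda i)
  (N0 : forall i, 0 <= N i).

Definition X (t : R) : 'I_K -> R :=
  xsol (fun j => mu j * t) P (fun j => N j + lambda j * t).

Lemma X_eqn t : 0 <= t ->
  x_eqn (fun j => mu j * t) P (fun j => N j + lambda j * t) (X t).
Proof.
move=> t0; apply: getPex; apply: (@xsol_exists K P hs) => i.
  exact: mulr_ge0.
by rewrite addr_ge0 // mulr_ge0.
Qed.

Lemma X_uniq t x : 0 <= t ->
  x_eqn (fun j => mu j * t) P (fun j => N j + lambda j * t) x ->
  forall i, X t i = x i.
Proof.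
move=> t0 [_ hx] i; have [_ hX] := X_eqn t0.
apply/le_anti/andP; split.
  apply: (@Cmp K P hs hr _ _ _ _ _ _ (fun _ => lexx _) (fun _ => lexx _) _ hx) => k.
  by rewrite -hX.
apply: (@Cmp K P hs hr _ _ _ _ _ _ (fun _ => lexx _) (fun _ => lexx _) _ hX) => k.
by rewrite -hx.
Qed.

Lemma X_ge0 t i : 0 <= t -> 0 <= X t i.
Proof. by move=> t0; case: (X_eqn t0). Qed.

Lemma X_fix t i : 0 <= t ->
  X t i = N i + lambda i * t + \sum_j P j i * Num.min (X t j) (mu j * t).
Proof. by move=> t0; case: (X_eqn t0) => _ ->. Qed.

Lemma X0 i : X 0 i = N i.
Proof.
apply: X_uniq (lexx _) _ i; split=> // k.
rewrite mulr0 addr0 big1 ?addr0 // => j _.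
by rewrite mulr0 (@min_r _ _ (N j) 0) ?mulr0 // N0.
Qed.

Lemma X_mono s t i : 0 <= s -> s <= t -> X s i <= X t i.
Proof.
move=> s0 st; have t0 := le_trans s0 st.
have [_ hs'] := X_eqn s0; have [_ ht] := X_eqn t0.
apply: (@Cmp K P hs hr (fun j => N j + lambda j * s) (fun j => N j + lambda j * t)
  (fun j => mu j * s) (fun j => mu j * t) (X s) (X t) _ _ _ ht) => k /=.
- by rewrite lerD2l ler_wpM2l.
- by rewrite ler_wpM2l.
- by rewrite -hs'.
Qed.

Lemma X_hom s t i : 0 < s -> s <= t -> s * X t i <= t * X s i.
Proof.
move=> s0 st; have t0 : 0 < t := lt_le_trans s0 st.
pose c := s / t.
have c0 : 0 <= c by rewrite divr_ge0 // ltW.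
have c1 : c <= 1 by rewrite ler_pdivrMr // mul1r.
have ct : c * t = s by rewrite /c divfK // gt_eqF.
have [_ ht] := X_eqn (ltW t0); have [_ hs'] := X_eqn (ltW s0).
have key := @Cmp K P hs hr (fun j => N j + lambda j * s) (fun j => N j + lambda j * s)
   (fun j => mu j * s) (fun j => mu j * s) (fun j => c * X t j) (X s)
   (fun _ => lexx _) (fun _ => lexx _).
have : c * X t i <= X s i.
  apply: key => // k.
  rewrite ht mulrDr mulrDr; apply: lerD; first apply: lerD.
  - by rewrite -[leRHS]mul1r ler_wpM2r.
  - by rewrite mulrCA ct.
  rewrite mulr_sumr; apply: ler_sum => j _; rewrite mulrCA minr_pMr //.
  by rewrite (mulrCA c) ct.
rewrite /c -(ler_pM2l t0) mulrA mulrCA divff ?gt_eqF // mulr1.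
by rewrite [_ * X s i]mulrC.
Qed.


Lemma X_bound0 i x : 0 < x ->
  `|X x i - X 0 i| <= (lambda i + \sum_j P j i * mu j) * x.
Proof.
move=> x0; have m := X_mono i (lexx 0) (ltW x0).
rewrite ger0_norm ?subr_ge0 // X0 X_fix; last exact: ltW.
have hS : \sum_j P j i * Num.min (X x j) (mu j * x) <= (\sum_j P j i * mu j) * x.
  rewrite mulr_suml; apply: ler_sum => j _; rewrite -mulrA ler_wpM2l //; first by case: hs.
  by rewrite ge_min lexx orbT.
lra.
Qed.

Lemma X_boundt t i : 0 < t -> forall x, t / 2 < x ->
  `|X x i - X t i| <= 2 * X t i / t * `|x - t|.
Proof.
move=> t0 x xt.
have x0 : 0 < x by lra.
have a0 := X_ge0 i (ltW t0).
suff h : t * `|X x i - X t i| <= 2 * X t i * `|x - t|.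
  by rewrite mulrAC ler_pdivlMr // mulrC.
have [tx|xt'] := leP t x.
  have hb := X_mono i (ltW t0) tx.
  have hh := X_hom i t0 tx.
  rewrite !ger0_norm ?subr_ge0 //; nra.
have hb := X_mono i (ltW x0) (ltW xt').
have hh := X_hom i x0 (ltW xt').
rewrite !ler0_norm ?subr_le0 ?(ltW xt') //; nra.
Qed.

Lemma X_phi i t : 0 <= t ->
  Num.min (inf [set mu i * t - mu i * s + X s i | s in [set s | 0 <= s <= t]])
    (mu i * t) = Num.min (X t i) (mu i * t).
Proof.
move=> t0.
set E := [set _ | s in _].
have Et : E (X t i) by exists t; [rewrite /= t0 lexx | rewrite subrr add0r].
have lbE : lbound E 0.
  move=> _ [s /andP[s0 st] <-]; rewrite -mulrBr addr_ge0 ?X_ge0 //.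
  by rewrite mulr_ge0 // subr_ge0.
have h1 : inf E <= X t i by apply: (ge_inf (ex_intro _ 0 lbE)).
have h2 : Num.min (X t i) (mu i * t) <= inf E.
  apply: lb_le_inf; first by exists (X t i).
  move=> _ [s /andP[s0 st] <-].
  have [hs1|hs1] := leP (mu i * s) (X s i).
    rewrite ge_min; apply/orP; right; lra.
  rewrite ge_min; apply/orP; left.
  have spos : 0 < s.
    rewrite lt_neqAle s0 andbT; apply/negP => /eqP s_0.
    by move: hs1; rewrite -s_0 mulr0 ltNge X_ge0.
  have hh := X_hom i spos st.
  have m0 := mu0 i.
  suff : s * (X t i - X s i) <= s * (mu i * t - mu i * s) by rewrite ler_pM2l //; lra.
  nra.
have [ht|ht] := leP (X t i) (mu i * t).
  have e : inf E = X t i by apply/le_anti; rewrite h1 /=; move: h2; rewrite (min_l ht).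
  by rewrite e (min_l ht).
by rewrite (min_r (ltW ht)) in h2; rewrite (min_r h2).
Qed.


Definition Ac (i : 'I_K) (t : R) := X t i.
Definition Dc (i : 'I_K) (t : R) := Num.min (X t i) (mu i * t).

Lemma Dc_ge0 i t : 0 <= t -> 0 <= Dc i t.
Proof. by move=> t0; rewrite /Dc le_min X_ge0 // mulr_ge0. Qed.

Lemma Dc_mono i s t : 0 <= s -> s <= t -> Dc i s <= Dc i t.
Proof.
move=> s0 st; rewrite /Dc le_min !ge_min X_mono // (ler_wpM2l (mu0 i) st).
by rewrite !orbT.
Qed.

Lemma cand_D : Dspace Ac.
Proof.
move=> i; split.
- by move=> t t0; exact: X_ge0.
- by move=> s t s0 st; exact: X_mono.
apply: (@cadlag_of _ (lambda i + \sum_j P j i * mu j)).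
  by move=> x x0; exact: X_bound0.
by move=> t t0; exists (2 * X t i / t) => x xt; exact: X_boundt.
Qed.

Lemma cand_D0 : D0space Dc.
Proof.
split; last by move=> i; rewrite /Dc X0 mulr0 min_r.
move=> i; split.
- by move=> t t0; exact: Dc_ge0.
- by move=> s t s0 st; exact: Dc_mono.
apply: (@cadlag_of _ (lambda i + \sum_j P j i * mu j + mu i)).
  move=> x x0; apply: le_trans (min_lip _ _ _ _) _.
  rewrite mulrDl lerD ?X_bound0 //.
  by rewrite mulr0 subr0 ger0_norm ?mulr_ge0 // ltW.
move=> t t0; exists (2 * X t i / t + mu i) => x xt.
apply: le_trans (min_lip _ _ _ _) _.
rewrite mulrDl lerD ?X_boundt //.
by rewrite -mulrBr normrM ger0_norm.
Qed.

Lemma cand_eq i t : 0 <= t ->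
  Ac i t = Gamma Dc (fun i j t => P i j * t) (fun i t => N i + lambda i * t) i t /\
  Dc i t = Phi Ac (fun i t => mu i * t) i t.
Proof.
move=> t0; split; first exact: X_fix.
by rewrite /Phi /Dc -X_phi.
Qed.


Lemma uniq_D (A D : 'I_K -> R -> R) : Dspace A -> D0space D ->
  (forall i t, 0 <= t ->
    A i t = Gamma D (fun i j t => P i j * t) (fun i t => N i + lambda i * t) i t /\
    D i t = Phi A (fun i t => mu i * t) i t) ->
  forall i T, 0 <= T -> D i T = Dc i T.
Proof.
move=> hA [hD _] heq i0 T T0.
pose I := [set s : R | 0 <= s <= T].
have IT : I T by rewrite /I /= T0 lexx.
pose e j := sup [set `|D j s - Dc j s| | s in I].
have he j s : I s -> `|D j s - Dc j s| <= e j.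
  move=> Is; apply: ub_le_sup; last by exists s.
  exists (D j T + Dc j T) => _ [r /andP[r0 rT] <-].
  have [d0 dm _] := hD j.
  have a1 := d0 r r0; have a2 := dm r T r0 rT.
  have b1 := Dc_ge0 j r0; have b2 := Dc_mono j r0 rT.
  rewrite ler_norml; apply/andP; split; lra.
have e0 j : 0 <= e j by apply: le_trans (he j T IT).
pose f i := \sum_j P j i * e j.
have hAr i r : I r -> `|A i r - Ac i r| <= f i.
  move=> Ir; have /andP[r0 _] := Ir.
  have -> : A i r - Ac i r = \sum_j (P j i * D j r - P j i * Dc j r).
    rewrite sumrB (proj1 (heq i r r0)) (proj1 (cand_eq i r0)) /Gamma /=; lra.
  apply: le_trans (ler_norm_sum _ _ _) _; apply: ler_sum => j _.
  have Pji : 0 <= P j i by case: hs.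
  by rewrite -mulrBr normrM ger0_norm // ler_wpM2l // he.
have hDs i s : I s -> `|D i s - Dc i s| <= f i.
  move=> /andP[s0 sT].
  rewrite (proj2 (heq i s s0)) (proj2 (cand_eq i s0)) /Phi.
  apply: le_trans (min_lip _ _ _ _) _; rewrite subrr normr0 addr0.
  apply: inf_lip.
  - by exists s; rewrite /= s0 lexx.
  - move=> r /andP[r0 rs]; rewrite -mulrBr addr_ge0 ?mulr_ge0 ?subr_ge0 //.
    by have [+ _ _] := hA i; apply.
  - move=> r /andP[r0 rs]; rewrite -mulrBr addr_ge0 ?mulr_ge0 ?subr_ge0 //.
    exact: X_ge0.
  - move=> r /andP[r0 rs] /=; rewrite opprD addrACA subrr add0r.
    by apply: hAr; rewrite /I /= r0 (le_trans rs sT).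
have efe j : e j <= f j.
  apply: ge_sup; first by exists `|D j T - Dc j T|, T.
  by move=> _ [s Is <-]; exact: hDs.
have := @Lnonneg K P hs hr e e0 efe i0.
move=> ez; have := he i0 T IT; rewrite ez.
by rewrite normr_le0 subr_eq0 => /eqP.
Qed.

End Net.

Theorem mainTheorem3 (K : nat) (P : 'M[R]_K) (mu lambda N : 'I_K -> R) :
  substochastic P -> spectral_radius P < 1 ->
  (forall i, 0 <= mu i) -> (forall i, 0 <= lambda i) -> (forall i, 0 <= N i) ->
  let Nf := fun (i : 'I_K) (t : R) => N i + lambda i * t in
  let Sf := fun (i : 'I_K) (t : R) => mu i * t in
  let Pf := fun (i j : 'I_K) (t : R) => P i j * t in
  let is_sol := fun A D : 'I_K -> R -> R =>
    [/\ Dspace A, D0space D &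
        forall i (t : R), 0 <= t ->
          A i t = Gamma D Pf Nf i t /\ D i t = Phi A Sf i t] in
  (exists A D, is_sol A D) /\
  (forall A D, is_sol A D ->
     forall i (t : R), 0 <= t ->
       A i t = xsol (fun j => mu j * t) P (fun j => N j + lambda j * t) i /\
       D i t = Num.min (A i t) (mu i * t)).
Proof.
move=> hs hr mu0 la0 N0 Nf Sf Pf is_sol.
split.
  exists (Ac P mu lambda N), (Dc P mu lambda N); split.
  - exact: cand_D.
  - exact: cand_D0.
  - by move=> i t t0; apply: cand_eq.
move=> A D [hA hD heq] i t t0.
have eD : forall j, D j t = Dc P mu lambda N j t.
  by move=> j; apply: (uniq_D hs hr mu0 la0 N0 hA hD heq).
have eA : A i t = Ac P mu lambda N i t.
  rewrite (proj1 (heq i t t0)) (proj1 (cand_eq hs hr mu0 la0 N0 i t0)) /Gamma.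
  by under eq_bigr do rewrite eD.
split; first exact: eA.
by rewrite eD /Dc eA.
Qed.
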